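(* Let $K$ be a field and let $f\colon\mathbb Z^k\to K$ be the characteristic function of a half-space in $\mathbb Z^k$. Then $f$ is a hypergeometric term on $\mathbb Z^k$; in fact, for every $\vec w\in\mathbb Z^k$, $f=f^{\vec w}$ almost everywhere.
   Context: $f^{\vec w}(\vec z)=f(\vec z+\vec w)$. A half-space is $\{\vec z\in\mathbb Z^k:\vec v\cdot\vec z>n\}$ with $\vec v\in\mathbb Z^k$, $n\in\mathbb Z$. A hyperplane is $\{\vec z\in\mathbb Z^k:\vec v\cdot\vec z=n\}$ with $\vec v\in\mathbb Z^k\setminus\{0\}$, $n\in\mathbb Z$; a set of measure zero is a subset covered by finitely many hyperplanes; two functions are equal almost everywhere if they agree outside a set of measure zero. A hypergeometric term on $\mathbb Z^k$ over $K$ is a function $f\colon\mathbb Z^k\to K$ such that for each $i\in\{1,\dots,k\}$ there are nonzero polynomials $A_i,B_i\in K[\vec z]$ with $A_i(\vec z)f(\vec z)=B_i(\vec z)f(\vec z+\vec e_i)$ for all $\vec z\in\mathbb Z^k$. *)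

(* Defs.v *)
From HB Require Import structures.
From mathcomp Require Import all_boot all_order all_algebra.
From mathcomp Require Import mpoly.
Set Implicit Arguments. Unset Strict Implicit. Unset Printing Implicit Defensive.
Import Order.TTheory GRing.Theory Num.Theory.
Local Open Scope ring_scope.

Definition zvec (k : nat) := 'I_k -> int.

Definition zdot (k : nat) (v z : zvec k) : int := \sum_(i < k) v i * z i.

Definition zadd (k : nat) (z w : zvec k) : zvec k := fun i => z i + w i.

Definition zunit (k : nat) (i : 'I_k) : zvec k := fun j => (i == j)%:R.

Definition shift (K : Type) (k : nat) (f : zvec k -> K) (w : zvec k) : zvec k -> K :=
  fun z => f (zadd z w).

Definition halfspace (k : nat) (v : zvec k) (n : int) : zvec k -> Prop :=
  fun z => n < zdot v z.

Definition halfspace_char (K : fieldType) (k : nat) (v : zvec k) (n : int)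
  : zvec k -> K := fun z => if n < zdot v z then 1 else 0.

Definition hyperplane (k : nat) (v : zvec k) (n : int) : zvec k -> Prop :=
  fun z => zdot v z = n.

Definition measure_zero (k : nat) (S : zvec k -> Prop) : Prop :=
  exists (m : nat) (vs : 'I_m -> zvec k) (ns : 'I_m -> int),
    (forall j, exists i, vs j i != 0) /\
    (forall z, S z -> exists j, hyperplane (vs j) (ns j) z).

Definition ae_eq (K : Type) (k : nat) (f g : zvec k -> K) : Prop :=
  exists S : zvec k -> Prop, measure_zero S /\ (forall z, ~ S z -> f z = g z).

Definition zeval (K : fieldType) (k : nat) (p : {mpoly K[k]}) (z : zvec k) : K :=
  p.@[fun i => (z i)%:~R].

Definition hypergeometric (K : fieldType) (k : nat) (f : zvec k -> K) : Prop :=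
  forall i : 'I_k, exists A B : {mpoly K[k]},
    A != 0 /\ B != 0 /\
    forall z : zvec k, zeval A z * f z = zeval B z * f (zadd z (zunit i)).

(* Main.v *)
Require Import Defs.
From mathcomp Require Import all_boot all_order all_algebra.
From mathcomp Require Import mpoly.
From mathcomp Require Import zify.
Import GRing.Theory Num.Theory.
Local Open Scope ring_scope.

Lemma zdotD k (v z w : zvec k) : zdot v (zadd z w) = zdot v z + zdot v w.
Proof. by rewrite /zdot -big_split; apply: eq_bigr => i _; rewrite /zadd mulrDr. Qed.

Lemma zdotU k (v : zvec k) i : zdot v (zunit i) = v i.
Proof.
rewrite /zdot (bigD1 i) //= big1 ?addr0 /zunit ?eqxx ?mulr1 //.
by move=> j /negbTE; rewrite eq_sym => ->; rewrite mulr0.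
Qed.

Lemma key_diff (n a d : int) :
  (n < a) != (n < a + d) ->
  exists j : 'I_(2 * `|d|).+1, a = n + (nat_of_ord j)%:Z - (`|d|%N)%:Z.
Proof.
move=> H.
have Hj : (absz (a - n + Posz (absz d))%R < (2 * absz d).+1)%N.
  move: H; case: (ltrP n a) => h1; case: (ltrP n (a+d)) => h2 //= _; lia.
exists (Ordinal Hj) => /=.
move: H; case: (ltrP n a) => h1; case: (ltrP n (a+d)) => h2 //= _; lia.
Qed.

Lemma lin_neq0 (K : fieldType) k (L : {mpoly K[k]}) i c :
  L@_U_(i) != 0 -> L - c%:MP != 0.
Proof.
move=> H; apply/eqP => E; move: H; have -> : L = c%:MP.
  by apply/eqP; rewrite -subr_eq0 E.
by rewrite mcoeffC mnm1_eq0 mulr0 eqxx.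
Qed.

Theorem lemmaB19 (K : fieldType) (k : nat) (v : zvec k) (n : int) :
  hypergeometric (halfspace_char K v n) /\
  (forall w : zvec k, ae_eq (halfspace_char K v n) (shift (halfspace_char K v n) w)).
Proof.
split.
- move=> i.
  suff [P [HP Hz]] : exists P : {mpoly K[k]}, P != 0 /\ forall z,
      (n < zdot v z) != (n < zdot v z + v i) -> zeval P z = 0.
    exists P, P; split => //; split => // z.
    rewrite /halfspace_char zdotD zdotU.
    case: (boolP ((n < zdot v z) != (n < zdot v z + v i))) => [/Hz ->|].
      by rewrite !mul0r.
    by rewrite negbK => /eqP ->.
  have [Hvi|Hvi] := eqVneq ((v i)%:~R : K) 0; last first.
  + pose L : {mpoly K[k]} := \sum_(l < k) (v l)%:~R *: 'X_l.
    exists (\prod_(j < (2 * `|v i|).+1)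
              (L - ((n + (nat_of_ord j)%:Z - (`|v i|%N)%:Z)%:~R)%:MP)).
    split.
      rewrite prodf_seq_neq0; apply/allP => j _ /=; apply: (@lin_neq0 _ _ _ i).
      rewrite /L raddf_sum (bigD1 i) //= big1 ?addr0.
        by rewrite mcoeffZ mcoeffXU eqxx mulr1.
      by move=> l /negbTE hl; rewrite mcoeffZ mcoeffXU hl mulr0.
    move=> z /key_diff [j Ej]; rewrite /zeval rmorph_prod /=.
    apply/eqP; rewrite prodf_seq_eq0; apply/hasP; exists j; first by rewrite mem_index_enum.
    rewrite /= mevalB mevalC /L raddf_sum /=.
    under eq_bigr => l _ do rewrite mevalZ mevalXU.
    rewrite -Ej subr_eq0 /zdot rmorph_sum /=; apply/eqP/eq_bigr => l _.
    by rewrite rmorphM.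
  + pose m := `|v i|%N.
    exists (\prod_(j < m) ('X_i - (j%:R)%:MP)).
    split.
      rewrite prodf_seq_neq0; apply/allP => j _ /=; apply: (@lin_neq0 _ _ _ i).
      by rewrite mcoeffXU eqxx oner_eq0.
    move=> z Hd.
    have mpos : (0 < m)%N.
      rewrite /m absz_gt0; apply/negP => /eqP e; move: Hd; by rewrite e addr0 eqxx.
    have hm : (m%:R : K) = 0.
      change ((Posz m)%:~R = 0 :> K); rewrite /m abszE; case: (ler0P (v i)) => h.
        by rewrite mulrNz Hvi oppr0.
      exact: Hvi.
    have hm' : (Posz m != 0) by rewrite eqz_nat -lt0n.
    have h3 := modz_ge0 (z i) hm'.
    have h4 : (z i %% Posz m)%Z < Posz m by apply: ltz_pmod; rewrite ltz_nat.
    have Hj : (absz (z i %% Posz m)%Z < m)%N by lia.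
    rewrite /zeval rmorph_prod /=.
    apply/eqP; rewrite prodf_seq_eq0; apply/hasP; exists (Ordinal Hj); first by rewrite mem_index_enum.
    rewrite /= mevalB mevalC mevalXU subr_eq0.
    change ((z i)%:~R == (Posz `|(z i %% m)%Z|)%:~R :> K).
    rewrite (gez0_abs h3).
    have hm2 : ((Posz m)%:~R : K) = 0 by exact: hm.
    by rewrite {1}(divz_eq (z i) m) intrD intrM hm2 mulr0 add0r.
- move=> w.
  have [v0|[i0 Hi0]] : (forall i, v i = 0) \/ exists i, v i != 0.
    case: (pickP (fun i => v i != 0)) => [i hi|h]; [right; by exists i|left].
    by move=> i; apply/eqP/negbFE/h.
  + exists (fun _ => False); split.
      by exists 0%N, (fun _ => v), (fun _ => n); split; [case|move=> z []].
    move=> z _; rewrite /shift /halfspace_char /zdot.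
    by rewrite !big1 // => j _; rewrite v0 mul0r.
  + set d := zdot v w.
    exists (fun z => (n < zdot v z) != (n < zdot v z + d)); split.
      exists (2 * `|d|).+1, (fun _ => v), (fun j => n + (nat_of_ord j)%:Z - (`|d|%N)%:Z).
      split; first by move=> _; exists i0.
      by move=> z /key_diff [j Ej]; exists j.
    move=> z; rewrite /shift /halfspace_char zdotD -/d.
    by case: ifP; case: ifP => // h1 h2 []; rewrite h1 h2.
Qed.
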